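(* For every integer $k\ge0$, every finite $k$-cozy graph is $k$-comfortable.
   Context: An undirected graph $G$ is $k$-cozy if it is connected, $k$-regular, and equipped with a $1$-factorization, i.e., an assignment of colors from $\{1,\dots,k\}$ to its edges such that the $k$ edges incident at each vertex receive distinct colors. An undirected graph $G=(V,E)$ is $k$-comfortable if for every vertex $v\in V$ there is another vertex $v'\in V$ such that there exist $k$ pairwise edge-disjoint $v$–$v'$ paths in $G$. *)

(* Defs.v *)
From mathcomp Require Import all_boot.
Set Implicit Arguments. Unset Strict Implicit. Unset Printing Implicit Defensive.

Definition simple_graph (T : finType) (e : rel T) : Prop :=
  symmetric e /\ irreflexive e.

Definition connected_graph (T : finType) (e : rel T) : Prop :=
  forall x y : T, connect e x y.

Definition regular (T : finType) (e : rel T) (k : nat) : Prop :=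
  forall x : T, #|[set y | e x y]| = k.

(* Edges are
   unordered, so the colour c x y of edge {x,y} is symmetric. *)
Definition one_factorization (T : finType) (e : rel T) (k : nat)
  (c : T -> T -> 'I_k) : Prop :=
  (forall x y, e x y -> c x y = c y x) /\
  (forall x y z, e x y -> e x z -> c x y = c x z -> y = z).

Definition cozy (T : finType) (e : rel T) (k : nat) : Prop :=
  connected_graph e /\ regular e k /\
  exists c : T -> T -> 'I_k, one_factorization e c.

Definition is_path (T : finType) (e : rel T) (x y : T) (p : seq T) : bool :=
  [&& path e x p, last x p == y & uniq (x :: p)].

Definition path_edges (T : finType) (x : T) (p : seq T) : seq {set T} :=
  [seq [set a.1; a.2] | a <- zip (x :: p) p].

Definition comfortable (T : finType) (e : rel T) (k : nat) : Prop :=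
  forall v : T, exists v' : T, v' != v /\
    exists P : 'I_k -> seq T,
      (forall i, is_path e v v' (P i)) /\
      (forall i j, i != j -> forall E, E \in path_edges v (P i) ->
                                       E \notin path_edges v (P j)).

(* Main.v *)
Require Import Defs.
From mathcomp Require Import all_boot all_order all_algebra zify.
Set Implicit Arguments. Unset Strict Implicit. Unset Printing Implicit Defensive.
Import Order.TTheory GRing.Theory Num.Theory.

Section Walk.
Variable T : finType.

Definition arcs (x : T) (p : seq T) : seq (T * T) := zip (x :: p) p.
Definition rev2 (a : T * T) : T * T := (a.2, a.1).
Definition outp (S : {set T}) (a : T * T) : bool := (a.1 \in S) && (a.2 \notin S).
Definition gp (x : T) (p : seq T) (a : T * T) : int :=
  (Posz (count_mem a (arcs x p)) - Posz (count_mem (rev2 a) (arcs x p)))%R.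
Definition net (f : T * T -> int) (S : {set T}) : int := (\sum_(a | outp S a) f a)%R.

Lemma rev2K : involutive rev2. Proof. by case. Qed.
Lemma rev2_inj : injective rev2. Proof. exact: inv_inj rev2K. Qed.

Lemma arcs_cons x y p : arcs x (y :: p) = (x, y) :: arcs y p.
Proof. by []. Qed.

Lemma sumz (I : finType) (P : pred I) (F : I -> nat) :
  (\sum_(i | P i) (Posz (F i)))%R = Posz (\sum_(i | P i) F i).
Proof. by symmetry; apply: (big_morph Posz) => // m n; rewrite PoszD. Qed.

Lemma sum_count_mem (P : pred (T * T)) (L : seq (T * T)) :
  \sum_(a | P a) count_mem a L = count P L.
Proof.
elim: L => [|b L IH] /=; first by rewrite big1.
rewrite big_split /= IH; congr (_ + _).
rewrite big_mkcond (bigD1 b) //= eqxx big1 ?addn0; first by case: (P b).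
by move=> a /negbTE nab; rewrite eq_sym nab; case: (P a).
Qed.

Lemma cross_count S x p :
  count (outp S) (arcs x p) + (last x p \in S) =
  count (fun a => outp S (rev2 a)) (arcs x p) + (x \in S).
Proof.
elim: p x => [|y p IH] x /=; first by rewrite addnC.
rewrite /outp /=.
have := IH y; rewrite /outp /=.
rewrite /arcs; case: (x \in S); case: (y \in S) => /=; lia.
Qed.

Lemma net_gp S x p :
  net (gp x p) S = (Posz (x \in S) - Posz (last x p \in S))%R.
Proof.
rewrite /net /gp sumrB !sumz sum_count_mem.
have -> : \sum_(a | outp S a) count_mem (rev2 a) (arcs x p) =
          \sum_(a | outp S (rev2 a)) count_mem a (arcs x p).
  rewrite [RHS](reindex_inj rev2_inj) /=.
  by apply: eq_bigl => a; rewrite rev2K.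
rewrite sum_count_mem.
have := cross_count S x p.
set A := count (outp S) _; set B := count _ _.
lia.
Qed.

End Walk.
Section Flow.
Variable T : finType.
Variable e : rel T.
Hypothesis esy : symmetric e.
Variables v w : T.
Hypothesis vw : v != w.

Lemma mem_arcs (x : T) p (a : T * T) : a \in arcs x p -> (a.1 \in x :: p) && (a.2 \in p).
Proof.
elim: p x => [|y p IH] x //=; rewrite arcs_cons in_cons => /orP [/eqP -> | /IH].
  by rewrite /= !inE !eqxx ?orbT.
by case/andP=> h1 h2; apply/andP; split; rewrite in_cons ?h1 ?h2 orbT.
Qed.

Lemma path_arcs (r : rel T) (x : T) p (a : T * T) : path r x p -> a \in arcs x p -> r a.1 a.2.
Proof.
elim: p x => [|y p IH] x //=; rewrite arcs_cons in_cons => /andP [rxy hp] /orP [/eqP -> // | ha].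
exact: IH ha.
Qed.

Lemma uniq_arcs (x : T) p : uniq (x :: p) -> uniq (arcs x p).
Proof. by move=> u; apply: zip_uniql. Qed.

Lemma arcs_norev (x : T) p (a : T * T) : uniq (x :: p) -> a \in arcs x p -> rev2 a \notin arcs x p.
Proof.
elim: p x => [|y p IH] x //= /andP [nx u]; rewrite !arcs_cons !in_cons.
have nxp : x \notin p by move: nx; rewrite inE negb_or => /andP [].
have nxy : x != y by move: nx; rewrite inE negb_or => /andP [].
case/orP => [/eqP -> | ha].
  rewrite /rev2 /= xpair_eqE eq_sym (negbTE nxy) /=.
  by apply/negP => /mem_arcs /andP [_ /=]; rewrite (negbTE nxp).
rewrite (negbTE (IH _ u ha)) orbF; apply/negP => /eqP ea.
have : a = (y, x) by rewrite -[a]rev2K ea.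
move=> eqa; move: ha; rewrite eqa => /mem_arcs /andP [_ /=]; rewrite (negbTE nxp).
by [].
Qed.

Definition valid (f : T * T -> int) :=
  [/\ forall a, f (rev2 a) = (- f a)%R, forall a, (f a <= 1)%R &
      forall a, f a != 0%R -> e a.1 a.2].
Definition value (f : T * T -> int) (n : nat) :=
  forall S : {set T}, v \in S -> w \notin S -> net f S = Posz n.

Definition cutc (S : {set T}) : nat := \sum_(a | outp S a) e a.1 a.2.

Lemma gp_rev (x : T) p (a : T * T) : gp x p (rev2 a) = (- gp x p a)%R.
Proof. rewrite /gp rev2K; lia. Qed.

Lemma count_le1 (x : T) p (a : T * T) : uniq (x :: p) -> count_mem a (arcs x p) <= 1.
Proof. by move=> u; rewrite count_uniq_mem ?uniq_arcs //; case: (_ \in _). Qed.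

Lemma count_pos (x : T) p (a : T * T) : 0 < count_mem a (arcs x p) -> a \in arcs x p.
Proof. by rewrite -has_count; move/hasP=> [b hb /eqP <-]. Qed.

Lemma augment (f : T * T -> int) n p :
  valid f -> value f n ->
  path [rel x y | e x y && (f (x, y) < 1)%R] v p -> last v p = w -> uniq (v :: p) ->
  valid (fun a => f a + gp v p a)%R /\ value (fun a => f a + gp v p a)%R n.+1.
Proof.
move=> [fa fl fs] hv hp hl hu; split; last first.
  move=> S vS wS; rewrite /net big_split /= -/(net f S) -/(net (gp v p) S).
  by rewrite hv // net_gp hl vS (negbTE wS); lia.
split.
- by move=> a; rewrite fa gp_rev; lia.
- move=> a; rewrite /gp.
  have c1 := count_le1 a hu; have c2 := count_le1 (rev2 a) hu.
  case: (posnP (count_mem a (arcs v p))) => ca.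
    by rewrite ca; have := fl a; lia.
  have ha := count_pos ca.
  have := path_arcs hp ha => /= /andP [_ ha1].
  have hr := arcs_norev hu ha.
  rewrite !(count_uniq_mem _ (uniq_arcs hu)) ha (negbTE hr) /=.
  by move: ha1; case: a {c1 c2 ca ha hr} => a1 a2 /=; lia.
- move=> a; rewrite /gp.
  case: (posnP (count_mem a (arcs v p))) => ca.
    case: (posnP (count_mem (rev2 a) (arcs v p))) => cr.
      by rewrite ca cr => h; apply: fs; move: h; lia.
    move=> _; have := path_arcs hp (count_pos cr) => /= /andP [+ _].
    by rewrite esy.
  by move=> _; have := path_arcs hp (count_pos ca) => /= /andP [+ _].
Qed.


Lemma menger k :
  (forall S : {set T}, v \in S -> w \notin S -> k <= cutc S) ->
  exists f, valid f /\ value f k.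
Proof.
move=> hk.
suff: forall n, n <= k -> exists f, valid f /\ value f n by apply.
elim=> [_|n IH hn].
  exists (fun _ => 0%R); split; first split.
  - by move=> a; rewrite oppr0.
  - by [].
  - by move=> a; rewrite eqxx.
  by move=> S _ _; rewrite /net big1.
have [f [hf hv]] := IH (ltnW hn).
pose r := [rel x y | e x y && (f (x, y) < 1)%R].
case: (boolP (connect r v w)) => [/connectP [p0 hp0 hl0] | nc].
  move: hl0; case: (shortenP hp0) => p hp hu _ hl.
  exists (fun a => f a + gp v p a)%R; exact: augment.
exfalso.
pose S := [set x | connect r v x].
have vS : v \in S by rewrite inE connect0.
have wS : w \notin S by rewrite inE.
have := hv S vS wS.
have -> : net f S = Posz (cutc S).
  rewrite /net /cutc -sumz; apply: eq_bigr => -[a1 a2] /andP [x1 x2].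
  move: x1 x2; rewrite !inE /= => x1 x2.
  case: hf => _ fl fs.
  case ea: (e a1 a2).
    have : ~~ (f (a1, a2) < 1)%R.
      apply/negP => lt; move: x2; rewrite (connect_trans x1) //.
      by apply: connect1; rewrite /= ea lt.
    by have := fl (a1, a2); lia.
  case: (f (a1, a2) =P 0%R) => // /eqP /fs /=; rewrite ea.
  by [].
by have := hk S vS wS; lia.
Qed.

Definition Rd p q :=
  all (fun a => (a \notin arcs v q) && (rev2 a \notin arcs v q)) (arcs v p).

Lemma decomp n : forall f, valid f -> value f n ->
  exists L : seq (seq T), [/\ size L = n,
    (forall q, q \in L -> [/\ path e v q, last v q = w, uniq (v :: q) &
                              forall a, a \in arcs v q -> f a = 1%R]) &
    pairwise Rd L].
Proof.
elim: n => [|n IH] f hf hv; first by exists [::]; split.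
pose r := [rel x y | f (x, y) == 1%R].
have : connect r v w.
  apply: contraT => nc.
  pose S := [set x | connect r v x].
  have vS : v \in S by rewrite inE connect0.
  have wS : w \notin S by rewrite inE.
  have := hv S vS wS.
  have : (net f S <= 0)%R.
    rewrite /net; apply: (@le_trans _ _ (\sum_(a | outp S a) 0)%R); last by rewrite big1.
    apply: ler_sum => -[a1 a2] /andP [x1 x2]; move: x1 x2; rewrite !inE /= => x1 x2.
    case: hf => _ fl _; have := fl (a1, a2).
    case: (f (a1, a2) =P 1%R) => [e1 | ne1].
      by move: x2; rewrite (connect_trans x1) // connect1 //= e1.
    lia.
  lia.
move=> /connectP [p0 hp0 hl0]; move: hl0; case: (shortenP hp0) => p hp hu _ /esym hl.
case: hf => fa fl fs.
have fa1 : forall a, a \in arcs v p -> f a = 1%R.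
  by move=> [a1 a2] ha; have := path_arcs hp ha => /= /eqP.
pose f' := fun a => (f a - gp v p a)%R.
have f'E : forall a, f' a = (f a - Posz (a \in arcs v p) + Posz (rev2 a \in arcs v p))%R.
  move=> a; rewrite /f' /gp (count_uniq_mem a (uniq_arcs hu)) (count_uniq_mem (rev2 a) (uniq_arcs hu)).
  by rewrite opprB addrA addrAC.
have f'0 : forall a, (a \in arcs v p) || (rev2 a \in arcs v p) -> f' a = 0%R.
  move=> a /orP [ha | hr].
    by rewrite f'E ha (negbTE (arcs_norev hu ha)) (fa1 _ ha).
  have ha : a \notin arcs v p by have := arcs_norev hu hr; rewrite rev2K.
  have := fa1 _ hr; rewrite fa => h.
  by rewrite f'E hr (negbTE ha); lia.
have f'1 : forall a, ~~ ((a \in arcs v p) || (rev2 a \in arcs v p)) -> f' a = f a.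
  by move=> a; rewrite negb_or f'E => /andP [/negbTE -> /negbTE ->]; lia.
have hf' : valid f'.
  split.
  - by move=> a; rewrite /f' fa gp_rev; lia.
  - move=> a; case: (boolP ((a \in arcs v p) || (rev2 a \in arcs v p))) => h.
      by rewrite f'0.
    by rewrite f'1.
  - move=> a; case: (boolP ((a \in arcs v p) || (rev2 a \in arcs v p))) => h.
      by rewrite f'0 ?eqxx.
    by rewrite f'1 //; apply: fs.
have hv' : value f' n.
  move=> S vS wS; rewrite /net /f' sumrB -/(net f S) -/(net (gp v p) S).
  by rewrite hv // net_gp hl vS (negbTE wS); lia.
have [L' [sL hL pL]] := IH f' hf' hv'.
have notp : forall q a, q \in L' -> a \in arcs v q ->
    ~~ ((a \in arcs v p) || (rev2 a \in arcs v p)).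
  move=> q a hq ha; apply/negP => h.
  by have [_ _ _ /(_ a ha)] := hL q hq; rewrite f'0.
exists (p :: L'); split.
- by rewrite /= sL.
- move=> q; rewrite in_cons => /orP [/eqP -> | hq].
    split => //; first by apply: (sub_path _ hp) => x y /= /eqP h; apply: (fs (x, y)); rewrite h.
  have [h1 h2 h3 h4] := hL q hq; split => // a ha.
  by rewrite -f'1 ?h4 // (notp q).
- rewrite /= pL andbT; apply/allP => q hq; apply/allP => a ha /=.
  apply/andP; split; apply/negP => hb.
    by have := notp q a hq hb; rewrite ha.
  by have := notp q _ hq hb; rewrite rev2K ha orbT.
Qed.

End Flow.

Section Cuts.
Variable T : finType.
Variable e : rel T.
Hypothesis esy : symmetric e.

Lemma cutcC (S : {set T}) : cutc e (~: S) = cutc e S.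
Proof.
rewrite /cutc (reindex_inj (@rev2_inj T)); apply: eq_big => [a|a _].
  by rewrite /outp /= !inE negbK andbC.
by rewrite /= esy.
Qed.

Definition dd (S : {set T}) := \sum_(a : T * T) (e a.1 a.2 && ((a.1 \in S) != (a.2 \in S))).

Lemma dd_cutc S : dd S = (cutc e S).*2.
Proof.
rewrite -addnn -{2}cutcC /dd /cutc !(big_mkcond (outp _)) -big_split /=.
apply: eq_bigr => a _; rewrite /outp !inE.
by case: (a.1 \in S); case: (a.2 \in S); case: (e _ _).
Qed.

Lemma posimod (C D : {set T}) :
  cutc e (C :\: D) + cutc e (D :\: C) <= cutc e C + cutc e D.
Proof.
rewrite -leq_double !doubleD -!dd_cutc /dd -!big_split /=.
apply: leq_sum => a _; rewrite !inE.
by case: (a.1 \in C); case: (a.2 \in C); case: (a.1 \in D); case: (a.2 \in D); case: (e _ _).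
Qed.

Lemma inv_even (s : T -> T) : involutive s -> (forall x, s x != x) ->
  forall A : {set T}, (forall x, x \in A -> s x \in A) -> ~~ odd #|A|.
Proof.
move=> sK sN A; have [n] := ubnP #|A|; elim: n A => // n IH A /ltnSE hA cl.
case: (set_0Vmem A) => [-> | [x xA]]; first by rewrite cards0.
pose A' := A :\: [set x; s x].
have sub : [set x; s x] \subset A by apply/subsetP => y; rewrite !inE => /orP [] /eqP ->; rewrite ?cl.
have cA : #|A'| = #|A| - 2.
  by rewrite cardsD (setIidPr sub) cards2 eq_sym sN.
have c2 : 2 <= #|A| by have := subset_leq_card sub; rewrite cards2 eq_sym (sN x).
have cl' : forall y, y \in A' -> s y \in A'.
  move=> y; rewrite /A' !inE negb_or => /andP [/andP [yx ysx] yA].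
  rewrite cl // andbT negb_or; apply/andP; split.
    by apply: contra ysx => /eqP <-; rewrite sK.
  by apply: contra yx => /eqP /(can_inj sK) ->.
have lt : #|A'| < n by rewrite cA; lia.
have := IH A' lt cl'; rewrite cA; move: c2; case: #|A| => [|[|m]] //= _.
by rewrite !subSS subn0 negbK.
Qed.

End Cuts.

Section Color.
Variable T : finType.
Variable e : rel T.
Hypothesis esy : symmetric e.
Hypothesis irr : irreflexive e.
Variable k : nat.
Hypothesis reg : forall x : T, #|[set y | e x y]| = k.
Variable c : T -> T -> 'I_k.
Hypothesis hc1 : forall x y, e x y -> c x y = c y x.
Hypothesis hc2 : forall x y z, e x y -> e x z -> c x y = c x z -> y = z.

Lemma col_ex x (i : 'I_k) : exists y, e x y && (c x y == i).
Proof.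
pose N := [set y | e x y].
have inj : {in N &, injective (c x)} by move=> y z; rewrite !inE => hy hz; apply: hc2.
have h : [set c x y | y in N] = [set: 'I_k].
  apply/eqP; rewrite eqEcard subsetT cardsT card_ord (card_in_imset inj).
  by rewrite /N reg leqnn.
have : i \in [set c x y | y in N] by rewrite h inE.
by case/imsetP => y; rewrite inE => hy ->; exists y; rewrite hy eqxx.
Qed.

Definition csig (i : 'I_k) x := odflt x [pick y | e x y && (c x y == i)].

Lemma sigP i x : e x (csig i x) && (c x (csig i x) == i).
Proof.
rewrite /csig; case: pickP => [y //| h].
by have [y hy] := col_ex x i; rewrite h in hy.
Qed.

Lemma sigK i : involutive (csig i).
Proof.
move=> x; have /andP [h1 /eqP h2] := sigP i x.
have /andP [h3 /eqP h4] := sigP i (csig i x).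
apply: (hc2 h3); first by rewrite esy.
by rewrite h4 -(hc1 h1) h2.
Qed.

Lemma sigN i x : csig i x != x.
Proof.
have /andP [h _] := sigP i x.
by apply: contraTneq h => ->; rewrite irr.
Qed.

Lemma parity (X : {set T}) : cutc e X < k -> ~~ odd #|X|.
Proof.
apply: contraTN => oX; rewrite -leqNgt.
have ex : forall i : 'I_k, exists x, (x \in X) && (csig i x \notin X).
  move=> i; case: (boolP [exists x, (x \in X) && (csig i x \notin X)]) => [/existsP //| /existsPn h].
  have cl : forall x, x \in X -> csig i x \in X.
    by move=> x xX; have := h x; rewrite xX /= negbK.
  by have := inv_even (sigK i) (sigN i) cl; rewrite oX.
have [x0 x0X] : exists x0, x0 \in X.
  by case: (set_0Vmem X) => [h | [x hx]]; [move: oX; rewrite h cards0 | exists x].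
pose xi i := odflt x0 [pick x | (x \in X) && (csig i x \notin X)].
have xiP : forall i, (xi i \in X) && (csig i (xi i) \notin X).
  move=> i; rewrite /xi; case: pickP => [y //|h].
  by have [y hy] := ex i; rewrite h in hy.
pose g i := (xi i, csig i (xi i)).
have ginj : injective g.
  move=> i j [h1 h2].
  have /andP [_ /eqP ci] := sigP i (xi i).
  have /andP [_ /eqP cj] := sigP j (xi j).
  by move: ci; rewrite h2 h1 cj => ->.
have -> : k = #|[set g i | i : 'I_k]| by rewrite card_imset // card_ord.
rewrite -sum1_card /cutc big_mkcond [X in _ <= X]big_mkcond /=; apply: leq_sum => a _.
case: (boolP (a \in [set g i | i : 'I_k])) => // /imsetP [i _ ->].
rewrite /outp /=; have /andP [h1 h2] := xiP i; have /andP [h3 _] := sigP i (xi i).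
by rewrite h1 h2 h3.
Qed.

Lemma union_even (F : {set {set T}}) :
  (forall X, X \in F -> cutc e X < k) -> ~~ odd #|cover F|.
Proof.
have [n] := ubnP (\sum_(X in F) #|X|); elim: n F => // n IH F /ltnSE hn hF.
case: (boolP (trivIset F)) => tF.
  rewrite -(eqP tF); apply: (big_ind (fun m => ~~ odd m)) => //.
    by move=> a b ha hb; rewrite oddD (negbTE ha) (negbTE hb).
  by move=> X hX; apply: parity; apply: hF.
have : ~~ [forall C in F, forall D in F, (C != D) ==> [disjoint C & D]].
  apply: contra tF => /forall_inP h; apply/trivIsetP => A B hA hB AB.
  by have /forall_inP /(_ B hB) /implyP := h A hA; apply.
rewrite negb_forall_in => /exists_inP [C CF]; rewrite negb_forall_in => /exists_inP [D DF].
rewrite negb_imply => /andP [CD nd].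
have small : (cutc e (C :\: D) < k) || (cutc e (D :\: C) < k).
  have := posimod esy C D; have := hF C CF; have := hF D DF.
  case: (ltnP (cutc e (C :\: D)) k) => //=; lia.
wlog sm : C D CF DF CD nd {small} / cutc e (C :\: D) < k.
  move=> H; case/orP: small => h; first exact: (H C D).
  by apply: (H D C) => //; rewrite 1?eq_sym // disjoint_sym.
pose F' := (C :\: D) |: (F :\ C).
have cov : cover F' = cover F.
  apply/setP => x; apply/bigcupP/bigcupP => [[Y] | [Y YF xY]].
    rewrite /F' !inE => /orP [/eqP -> | /andP [_ YF]] xY; last by exists Y.
    by exists C => //; move: xY; rewrite inE => /andP [].
  case: (eqVneq Y C) => [eYC | nYC].
    case: (boolP (x \in D)) => xD.
      exists D => //; rewrite /F' !inE DF andbT; apply/orP; right; by rewrite eq_sym.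
    by exists (C :\: D); rewrite ?inE ?eqxx // xD -eYC.
  by exists Y => //; rewrite /F' !inE nYC YF orbT.
have hF' : forall X, X \in F' -> cutc e X < k.
  move=> X; rewrite /F' !inE => /orP [/eqP -> // | /andP [_ XF]]; exact: hF.
have sum' : \sum_(X in F') #|X| < n.
  have s1 : \sum_(X in F') #|X| <= #|C :\: D| + \sum_(X in F :\ C) #|X|.
    rewrite /F'; case: (boolP (C :\: D \in F :\ C)) => h.
      by rewrite (setUidPr _) ?leq_addl // sub1set.
    by rewrite big_setU1.
  have s2 : \sum_(X in F) #|X| = #|C| + \sum_(X in F :\ C) #|X| by rewrite (big_setD1 C).
  have s3 : #|C :\: D| < #|C|.
    rewrite cardsD; have : 0 < #|C :&: D| by rewrite card_gt0 setI_eq0.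
    have := subset_leq_card (subsetIl C D); lia.
  lia.
by rewrite -cov; apply: (IH F') => //.
Qed.

End Color.

Lemma set2_inv (T : finType) (x y x' y' : T) :
  [set x; y] = [set x'; y'] -> (x' = x /\ y' = y) \/ (x' = y /\ y' = x).
Proof.
move=> H.
have h1 : x' \in [set x; y] by rewrite H set21.
have h2 : y' \in [set x; y] by rewrite H set22.
have h3 : x \in [set x'; y'] by rewrite -H set21.
have h4 : y \in [set x'; y'] by rewrite -H set22.
move: h1 h2 h3 h4; rewrite !inE.
case/orP => /eqP e1; case/orP => /eqP e2; subst => //=; try by left.
- by move=> _ /orP [] /eqP ->; [left | left].
- by right.
- by move=> /orP [] /eqP -> _; [left | left].
Qed.

Lemma Rd_disj (T : finType) (v : T) p q a b :
  Rd v p q -> a \in arcs v p -> b \in arcs v q -> (b != a) && (b != rev2 a).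
Proof.
move=> /allP /(_ a) h ha hb; have /andP [n1 n2] := h ha.
by apply/andP; split; [apply: contraNneq n1 => <- | apply: contraNneq n2 => <-].
Qed.

Theorem mainTheorem14 (k : nat) (T : finType) (e : rel T) :
  simple_graph e -> cozy e k -> comfortable e k.
Proof.
move=> [esy irr] [conn [reg [c [hc1 hc2]]]] v.
have [w [wv hw]] : exists w, w != v /\
    forall S : {set T}, v \in S -> w \notin S -> k <= cutc e S.
  case: (boolP [exists w, (w != v) && [forall S : {set T},
           (v \in S) ==> (w \notin S) ==> (k <= cutc e S)]]).
    case/existsP => w /andP [wv /forallP h]; exists w; split => // S vS wS.
    by move: (h S); rewrite vS wS.
  rewrite negb_exists => /forallP hn; exfalso.
  pose F := [set ~: S | S in [pred S : {set T} | (v \in S) && (cutc e S < k)]].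
  have hF : forall X, X \in F -> cutc e X < k.
    by move=> X /imsetP [S /andP [_ hS] ->]; rewrite cutcC.
  have cov : cover F = [set~ v].
    apply/setP => x; rewrite !inE; apply/bigcupP/idP.
      move=> [Y /imsetP [S /andP [vS _] ->] xY].
      by apply: contraTneq xY => ->; rewrite inE vS.
    move=> xv; have := hn x; rewrite xv /= negb_forall => /existsP [S].
    rewrite !negb_imply => /andP [vS /andP [xS lt]].
    exists (~: S); last by rewrite inE.
    by apply: imset_f; rewrite inE vS ltnNge lt.
  have := union_even esy irr reg hc1 hc2 hF; rewrite cov cardsC1.
  have := parity esy irr reg hc1 hc2 (X := setT) (_ : cutc e setT < k).
  rewrite cardsT.
  have : 0 < #|T| by apply/card_gt0P; exists v.
  case: #|T| => [//|m] _ /= hm h; rewrite negbK in hm.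
  have k0 : 0 < k := leq_ltn_trans (leq0n _) (ltn_ord (c v v)).
  have c0 : cutc e [set: T] < k.
    by rewrite /cutc big_pred0 // => a; rewrite /outp !inE.
  by rewrite (hm c0) in h.
have vw : v != w by rewrite eq_sym.
have [f [hf hv]] := menger esy vw hw.
have [L [sL hL pL]] := decomp vw hf hv.
exists w; split => //.
exists (fun i => nth [::] L i); split.
  move=> i; have hq : nth [::] L i \in L by rewrite mem_nth // sL.
  have [h1 h2 h3 _] := hL _ hq.
  by rewrite /is_path h1 h2 eqxx h3.
move=> i j ij E /mapP [a ha ->]; apply/negP => /mapP [b hb] /set2_inv.
have hij : forall i' j' : 'I_k, i' < j' -> Rd v (nth [::] L i') (nth [::] L j').
  by move=> i' j' hlt; apply: (pairwiseP [::] pL) => //; rewrite unfold_in /= sL ltn_ord.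
move: ha hb; rewrite -/(arcs v _) -/(arcs v _) => ha hb.
have : (b != a) && (b != rev2 a).
  case: (ltngtP i j) => [hlt1 | hlt2 | heq].
  - exact: Rd_disj (hij _ _ hlt1) ha hb.
  - have /andP [n1 n2] := Rd_disj (hij _ _ hlt2) hb ha.
    apply/andP; split; first by rewrite eq_sym.
    by apply: contra n2 => /eqP ->; rewrite /rev2; case: (a).
  - by move: ij; rewrite -(inj_eq val_inj) /= heq eqxx.
case: a {ha} => a1 a2; case: b {hb} => b1 b2 /= /andP [n1 n2].
case=> [[e1 e2] | [e1 e2]]; subst; first by rewrite eqxx in n1.
by rewrite /rev2 eqxx in n2.
Qed.
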